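(* Let $G=K_{r_1,\dots,r_k}$ with $r_i\ge 7$ for every $i\in[k]$, and suppose $G$ does not have a good bisection. Then for every edge $e\in E(G)$, the graph $G-e$ does not have a good bisection.
   Context: A bisection of a graph $G$ is a bipartite spanning subgraph $H$ of $G$ with a bipartition into two partition sets (every edge of $H$ joining the two sets) whose sizes differ by at most one. It is good if $2d_H(v)\ge d_G(v)-1$ for every $v\in V(G)$. *)

(* Defs.v *)
(* Graphs are simple graphs given by a symmetric
   irreflexive adjacency relation on a finite vertex type. *)
From mathcomp Require Import all_boot.
Set Implicit Arguments. Unset Strict Implicit. Unset Printing Implicit Defensive.

Section Graphs.
Variable T : finType.

Definition deg (g : rel T) (v : T) : nat := #|[set u | g v u]|.

Definition spanning_subgraph (h g : rel T) : Prop :=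
  (forall u v, h u v = h v u) /\ (forall u v, h u v -> g u v).

Definition is_bisection (g h : rel T) (A : {set T}) : Prop :=
  [/\ spanning_subgraph h g,
      (forall u v, h u v -> (u \in A) != (v \in A)),
      #|A| <= #|~: A|.+1 & #|~: A| <= #|A|.+1].

(* good: 2 d_H(v) >= d_G(v) - 1 for all v (truncated subtraction is harmless) *)
Definition good (g h : rel T) : Prop :=
  forall v, (deg g v).-1 <= 2 * deg h v.

Definition has_good_bisection (g : rel T) : Prop :=
  exists (h : rel T) (A : {set T}), is_bisection g h A /\ good g h.

Definition del_edge (g : rel T) (x y : T) : rel T :=
  fun u v => g u v && ~~ (((u == x) && (v == y)) || ((u == y) && (v == x))).

End Graphs.

(* The complete multipartite graph K_{r_1,...,r_k}: vertices are pairs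
   (i, j) with i < k and j < r i; two vertices are adjacent iff they lie
   in different parts. *)
Definition Kmp_vertex (k : nat) (r : 'I_k -> nat) : finType :=
  {i : 'I_k & 'I_(r i)}.

Definition Kmp (k : nat) (r : 'I_k -> nat) : rel (Kmp_vertex r) :=
  fun u v => tag u != tag v.
Arguments Kmp_vertex {k} r.
Arguments Kmp {k} r.

(* Main.v *)
Require Import Defs.
From mathcomp Require Import all_boot zify.
Set Implicit Arguments. Unset Strict Implicit. Unset Printing Implicit Defensive.

Definition cross (T : finType) (A : {set T}) (g : rel T) : rel T :=
  fun u v => g u v && ((u \in A) != (v \in A)).

Lemma easy_case (T : finType) (g d h : rel T) (A : {set T}) w :
  (forall u, d w u = g w u) -> (forall u, h w u -> d w u) ->
  (forall u, h w u -> (w \in A) != (u \in A)) ->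
  (deg d w).-1 <= 2 * deg h w -> (deg g w).-1 <= 2 * deg (cross A g) w.
Proof.
move=> hdg hhd hc H.
have E : deg d w = deg g w.
  by rewrite /deg; apply: eq_card => u; rewrite !inE hdg.
have L : deg h w <= deg (cross A g) w.
  apply: subset_leq_card; apply/subsetP=> u; rewrite !inE /cross => hu.
  by rewrite -hdg hhd // hc.
rewrite -E; apply: leq_trans H _; by rewrite leq_mul2l L orbT.
Qed.

Lemma card_part k (r : 'I_k -> nat) i :
  r i <= #|[set u : Kmp_vertex r | tag u == i]|.
Proof.
have inj : injective (fun j : 'I_(r i) => Tagged (fun i => 'I_(r i)) j).
  move=> j1 j2 /(congr1 (tagged_as (Tagged (fun i => 'I_(r i)) j1))).
  by rewrite !tagged_asE.
have := card_imset [set: 'I_(r i)] inj.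
rewrite cardsT card_ord => <-.
apply: subset_leq_card; apply/subsetP=> u /imsetP [j _ ->]; by rewrite inE.
Qed.
Lemma key k (r : 'I_k -> nat) (hr : forall i, 7 <= r i) (d h : rel (Kmp_vertex r))
  (A : {set Kmp_vertex r}) x y :
  tag x != tag y ->
  (forall w u, w != x -> w != y -> d w u = Kmp r w u) ->
  (forall u, Kmp r x u -> u != y -> d x u) -> ~~ d x y ->
  (forall u v, d u v -> Kmp r u v) ->
  (forall u v, h u v -> d u v) ->
  (forall u v, h u v -> (u \in A) != (v \in A)) ->
  (forall v, (deg d v).-1 <= 2 * deg h v) ->
  #|A| <= #|~: A|.+1 -> #|~: A| <= #|A|.+1 ->
  (deg (Kmp r) x).-1 <= 2 * deg (cross A (Kmp r)) x.
Proof.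
move=> hxy hdw hdx hdxy hdg hhd hc hgood b1 b2.
have Ldx : deg (Kmp r) x <= (deg d x).+1.
  rewrite /deg; apply: (leq_trans (subset_leq_card (_ : _ \subset y |: [set u | d x u]))).
    apply/subsetP=> u; rewrite !inE => hu; case: eqP => //= /eqP uy; exact: hdx.
  by rewrite cardsU1; case: (y \notin _).
have Lhx : deg h x <= deg (cross A (Kmp r)) x.
  apply: subset_leq_card; apply/subsetP=> u; rewrite !inE /cross => hu.
  by rewrite hdg ?hhd // hc.
have Hgx := hgood x.
case: (boolP ((x \in A) != (y \in A))) => hxyA.
  have Lhx' : (deg h x).+1 <= deg (cross A (Kmp r)) x.
    rewrite /deg; have ny : y \notin [set u | h x u].
      by rewrite inE; apply/negP => /hhd; apply/negP.
    have E := cardsU1 y [set u | h x u]; rewrite ny in E.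
    rewrite -add1n -E; apply: subset_leq_card; apply/subsetP=> u.
    rewrite !inE; case: eqP => [->|_] /=.
      by rewrite /cross /Kmp hxy hxyA.
    by rewrite /cross => hu; rewrite hdg ?hhd // hc.
  lia.
set P := [set u : Kmp_vertex r | tag u == tag x].
set S := [set u : Kmp_vertex r | (u \in A) == (x \in A)].
case: (pickP [pred u | (u \in P :&: S) && (u != x)]) => [x' /= /andP [] | none].
  rewrite !inE => /andP [/eqP tx' /eqP Ax'] x'x.
  have x'y : x' != y by apply: contraNneq hxy => <-; rewrite tx'.
  have := easy_case (g := Kmp r) (d := d) (h := h) (A := A) (w := x')
     (fun u => hdw x' u x'x x'y) (fun u => hhd x' u) (fun u => hc x' u) (hgood x').
  have -> : deg (Kmp r) x' = deg (Kmp r) x.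
    by rewrite /deg; apply: eq_card => u; rewrite !inE /Kmp tx'.
  have -> : deg (cross A (Kmp r)) x' = deg (cross A (Kmp r)) x.
    by rewrite /deg; apply: eq_card => u; rewrite !inE /cross /Kmp tx' Ax'.
  by [].
exfalso.
have PS1 : #|P :&: S| <= 1.
  rewrite -(cards1 x); apply: subset_leq_card; apply/subsetP=> u hu.
  have := none u; rewrite /= hu /= => /negbT; rewrite negbK inE => ->; by [].
have hP := card_part r (tag x).
have edeg : deg (Kmp r) x = #|~: P|.
  by rewrite /deg; apply: eq_card => u; rewrite !inE /Kmp eq_sym.
have Lhc : deg h x <= #|~: P :&: ~: S|.
  apply: subset_leq_card; apply/subsetP=> u; rewrite !inE => hu.
  have := hdg _ _ (hhd _ _ hu); rewrite /Kmp eq_sym => -> /=.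
  have := hc _ _ hu; by case: (x \in A); case: (u \in A).
have cID (X Y : {set Kmp_vertex r}) : #|X| = #|X :&: Y| + #|X :&: ~: Y|.
  by rewrite -setDE cardsID.
have c1 : #|S| = #|P :&: S| + #|~: P :&: S| by rewrite (cID S P) setIC [S :&: _]setIC.
have c2 : #|~: S| = #|P :&: ~: S| + #|~: P :&: ~: S|.
  by rewrite (cID (~: S) P) setIC [~: S :&: _]setIC.
have eS : #|S| = #|A| /\ #|~: S| = #|~: A| \/ #|S| = #|~: A| /\ #|~: S| = #|A|.
  case hx: (x \in A); [left|right].
    suff -> : S = A by [].
    by apply/setP=> u; rewrite !inE hx eqb_id.
  suff -> : S = ~: A by rewrite setCK.
  by apply/setP=> u; rewrite !inE hx eqbF_neg.
have c5 : #|P| = #|P :&: S| + #|P :&: ~: S| by rewrite -cID.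
have c6 : #|~: P| = #|~: P :&: S| + #|~: P :&: ~: S| by rewrite -cID.
have := hr (tag x). rewrite -/P in hP.
lia.
Qed.

Theorem proposition3p4 (k : nat) (r : 'I_k -> nat) :
  (forall i, 7 <= r i) ->
  ~ has_good_bisection (Kmp r) ->
  forall x y : Kmp_vertex r, Kmp r x y ->
    ~ has_good_bisection (del_edge (Kmp r) x y).
Proof.
move=> hr nG x y hxy [h [A [[[hsym hsub] hc b1 b2] hgood]]].
apply: nG; exists (cross A (Kmp r)), A; split; first split.
- split=> u v; first by rewrite /cross /Kmp; congr andb; [rewrite eq_sym | case: (u \in A); case: (v \in A)].
  by case/andP.
- by move=> u v /andP [].
- by [].
- by [].
have hdg : forall u v, del_edge (Kmp r) x y u v -> Kmp r u v by move=> u v /andP [].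
have xy : x != y by apply: contraTneq hxy => ->; rewrite /Kmp eqxx.
move=> v.
case: (eqVneq v x) => [->|vx].
  apply: (key hr (d := del_edge (Kmp r) x y) (h := h) (y := y)).
  - exact: hxy.
  - by move=> w u wx wy; rewrite /del_edge (negbTE wx) (negbTE wy) andbT.
  - by move=> u hu uy; rewrite /del_edge hu eqxx (negbTE uy) (negbTE xy).
  - by rewrite /del_edge !eqxx /= andbF.
  - exact: hdg.
  - exact: hsub.
  - exact: hc.
  - exact: hgood.
  - exact: b1.
  - exact: b2.
case: (eqVneq v y) => [->|vy].
  apply: (key hr (d := del_edge (Kmp r) x y) (h := h) (y := x)).
  - by move: hxy; rewrite /Kmp eq_sym.
  - by move=> w u wy wx; rewrite /del_edge (negbTE wx) (negbTE wy) andbT.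
  - move=> u hu ux; rewrite /del_edge hu eqxx (negbTE ux) /= ?andbF ?orbF.
    by rewrite eq_sym (negbTE xy).
  - by apply/negP => /andP [_]; rewrite !eqxx orbC.
  - exact: hdg.
  - exact: hsub.
  - exact: hc.
  - exact: hgood.
  - exact: b1.
  - exact: b2.
apply: (easy_case (d := del_edge (Kmp r) x y)).
- by move=> u; rewrite /del_edge (negbTE vx) (negbTE vy) andbT.
- by move=> u /hsub.
- by move=> u /hc.
- exact: hgood.
Qed.
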